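(* Let $K$ be a field of characteristic zero and let $(p_n(x))_{n\ge0}$ be any sequence of polynomials in $K[x]$ with $\deg p_n=n$. Then: (a) the relations $Qp_n(x)=p_{n-1}(x)$ for $n>0$ and $Qp_0(x)=0$ define a unique $K$-linear operator $Q$ on $K[x]$; (b) the relations $q_n(0)=\delta_{n0}$, $Qq_n(x)=q_{n-1}(x)$ for $n>0$ and $Qq_0(x)=0$ define a unique sequence of polynomials $(q_n(x))_{n\ge0}$; (c) the relation $P_xq_n(x)=p_n(x)$ defines a $K$-linear operator $P_x$ on $K[x]$, and $P_x$ is invertible and $Q$-invariant, i.e. $P_xQ=QP_x$; (d) the sum $G^{(y)}=\sum_{n=0}^{\infty}q_n(y)\,Q^{n}$ converges (when applied to any polynomial only finitely many terms are nonzero) and defines a linear map $K[x]\to K[x,y]$, and the unique $K$-linear operator $F^{(y)}:K[x]\to K[x,y]$ satisfying $F^{(y)}p_n(x)=\sum_{k=0}^{n}p_k(x)\,p_{n-k}(y)$ for all $n\ge0$ is $F^{(y)}=P_yG^{(y)}$.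
   Context: A sequence of polynomials means a sequence $(r_n(x))_{n\ge0}$ with $\deg r_n=n$. In $G^{(y)}=\sum_n q_n(y)Q^n$, $Q$ acts on the variable $x$ and $q_n(y)$ is a scalar multiplier from $K[y]$. For an operator $\phi_x$ on $K[x]$, $\phi_y$ denotes the corresponding operator acting on the variable $y$ (obtained by renaming $x$ to $y$), extended $K[x]$-linearly to $K[x,y]$; operators on $K[x]$ are extended $K[y]$-linearly to $K[x,y]$. *)

(* Defs.v *)
From HB Require Import structures.
From mathcomp Require Import all_boot all_order all_algebra.
From mathcomp Require Import polyXY.
Set Implicit Arguments. Unset Strict Implicit. Unset Printing Implicit Defensive.
Import GRing.Theory.
Local Open Scope ring_scope.

(* Representation of K[x,y]: {poly {poly K}}, an (outer) polynomial in y whose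
   coefficients are polynomials in x.  A polynomial f(x) embeds as f%:P,
   a polynomial g(y) embeds as map_poly polyC g. *)

Definition xemb (K : fieldType) (f : {poly K}) : {poly {poly K}} := f%:P.
Definition yemb (K : fieldType) (g : {poly K}) : {poly {poly K}} := map_poly polyC g.

Definition opx (K : fieldType) (phi : {poly K} -> {poly K}) (h : {poly {poly K}}) :
  {poly {poly K}} := map_poly phi h.

(* the operator phi_y: phi acting on the y variable, extended K[x]-linearly *)
Definition opy (K : fieldType) (phi : {poly K} -> {poly K}) (h : {poly {poly K}}) :
  {poly {poly K}} := swapXY (map_poly phi (swapXY h)).

Definition lin2 (K : fieldType) (F : {poly K} -> {poly {poly K}}) : Prop :=
  forall (c : K) (f g : {poly K}), F (c *: f + g) = xemb c%:P * F f + F g.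

Definition isQ (K : fieldType) (p : nat -> {poly K}) (Q : {poly K} -> {poly K}) : Prop :=
  linear Q /\ Q (p 0%N) = 0 /\ (forall n, Q (p n.+1) = p n).

Definition isq (K : fieldType) (Q : {poly K} -> {poly K}) (q : nat -> {poly K}) : Prop :=
  (forall n, size (q n) = n.+1) /\
  (forall n, (q n).[0] = (n == 0%N)%:R) /\
  Q (q 0%N) = 0 /\ (forall n, Q (q n.+1) = q n).

Definition Gsum (K : fieldType) (q : nat -> {poly K}) (Q : {poly K} -> {poly K})
  (N : nat) (f : {poly K}) : {poly {poly K}} :=
  \sum_(n < N) yemb (q n) * xemb (iter n Q f).

Definition convp (K : fieldType) (p : nat -> {poly K}) (n : nat) : {poly {poly K}} :=
  \sum_(k < n.+1) xemb (p k) * yemb (p (n - k)%N).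

(* Main.v *)
Require Import Defs.
From Stdlib Require Import FunctionalExtensionality.
From HB Require Import structures.
From mathcomp Require Import all_boot all_order all_algebra polyXY.
Set Implicit Arguments. Unset Strict Implicit. Unset Printing Implicit Defensive.
Import GRing.Theory.
Local Open Scope ring_scope.

Section Basis.
Variable K : fieldType.
Implicit Types (f g : {poly K}) (b : nat -> {poly K}).

Lemma lin0 (E : {poly K} -> {poly K}) : linear E -> E 0 = 0.
Proof.
move=> hE; have := hE 1 0 0; rewrite scale1r addr0.
move=> h; have := congr1 (fun x => x - E 0) h; rewrite /= addrK subrr.
by rewrite scale1r => /esym.
Qed.

Lemma linD (E : {poly K} -> {poly K}) : linear E -> forall f g, E (f + g) = E f + E g.
Proof. by move=> hE f g; rewrite -[f]scale1r hE !scale1r. Qed.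

Lemma linZ (E : {poly K} -> {poly K}) : linear E -> forall c f, E (c *: f) = c *: E f.
Proof. by move=> hE c f; rewrite -[c *: f]addr0 hE lin0 // addr0. Qed.

Lemma decomp b : (forall n, size (b n) = n.+1) ->
  forall m f, (size f <= m.+1)%N -> exists c g, f = c *: b m + g /\ (size g <= m)%N
      /\ (size f = m.+1 -> c != 0).
Proof.
move=> hb m f hf.
exists (f`_m / lead_coef (b m)), (f - (f`_m / lead_coef (b m)) *: b m).
split; first by rewrite addrC subrK.
have hl : lead_coef (b m) != 0 by rewrite lead_coef_eq0 -size_poly_eq0 hb.
split.
  apply/leq_sizeP => j hj; rewrite coefB coefZ.
  case: (ltngtP j m) => [hjm|hjm|->]; first by rewrite ltnNge hj in hjm.
    have /leq_sizeP h1 := hf.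
    have /leq_sizeP h2 : (size (b m) <= m.+1)%N by rewrite hb.
    by rewrite (h1 j) // (h2 j) // mulr0 subr0.
  have -> : (b m)`_m = lead_coef (b m) by rewrite /lead_coef hb.
  by rewrite mulfVK // subrr.
move=> hs; rewrite mulf_eq0 invr_eq0 negb_or hl andbT.
by rewrite -[m]/(m.+1.-1) -hs -/(lead_coef f) lead_coef_eq0 -size_poly_eq0 hs.
Qed.

Lemma span_ind b : (forall n, size (b n) = n.+1) ->
  forall S : {poly K} -> Prop, S 0 -> (forall c f g, S f -> S g -> S (c *: f + g)) ->
  (forall n, S (b n)) -> forall f, S f.
Proof.
move=> hb S S0 SD Sb.
suff H : forall m f, (size f <= m)%N -> S f by move=> f; apply: (H (size f)).
elim=> [|m IH] f hf.
  by move: hf; rewrite leqn0 size_poly_eq0 => /eqP ->.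
have [c [g [-> [hg _]]]] := decomp hb hf.
by apply: SD; [apply: Sb | apply: IH].
Qed.

Lemma lin_uniq b : (forall n, size (b n) = n.+1) ->
  forall E1 E2 : {poly K} -> {poly K}, linear E1 -> linear E2 ->
  (forall n, E1 (b n) = E2 (b n)) -> E1 =1 E2.
Proof.
move=> hb E1 E2 h1 h2 he; apply: (span_ind hb) => //.
  by rewrite !lin0.
by move=> c f g e1 e2; rewrite h1 h2 e1 e2.
Qed.

Fixpoint ext b (v : nat -> {poly K}) n f : {poly K} :=
  if n is n'.+1 then
    (f`_n' / lead_coef (b n')) *: v n' + ext b v n' (f - (f`_n' / lead_coef (b n')) *: b n')
  else 0.

Lemma ext_lin b v n : linear (ext b v n).
Proof.
elim: n => [|n IH] a f g /=; first by rewrite scaler0 addr0.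
set c1 := f`_n / _; set c2 := g`_n / _.
have -> : (a *: f + g)`_n / lead_coef (b n) = a * c1 + c2.
  by rewrite coefD coefZ mulrDl mulrA.
have -> : a *: f + g - (a * c1 + c2) *: b n = a *: (f - c1 *: b n) + (g - c2 *: b n).
  by rewrite scalerDl -scalerA scalerBr; rewrite opprD !addrA; congr (_ + _);
     rewrite -!addrA; congr (_ + _); rewrite addrC.
rewrite IH scalerDr scalerDl -scalerA.
by rewrite -!addrA; congr (_ + _); rewrite !addrA; congr (_ + _); rewrite addrC.
Qed.

Lemma ext_stab b v : (forall n, size (b n) = n.+1) ->
  forall n f, (size f <= n)%N -> forall k, ext b v (n + k) f = ext b v n f.
Proof.
move=> hb n f hf; elim=> [|k IH]; first by rewrite addn0.
rewrite addnS /=.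
have /leq_sizeP -> := hf; last by rewrite leq_addr.
by rewrite mul0r !scale0r add0r subr0.
Qed.

Lemma ext_exists b (v : nat -> {poly K}) : (forall n, size (b n) = n.+1) ->
  exists E : {poly K} -> {poly K}, linear E /\ forall n, E (b n) = v n.
Proof.
move=> hb; exists (fun f => ext b v (size f) f); split.
  move=> a f g /=.
  set M := maxn (size f) (size g).
  have hM : forall h : {poly K}, (size h <= M)%N -> ext b v (size h) h = ext b v M h.
    by move=> h hh; rewrite -(subnKC hh) ext_stab.
  rewrite !hM ?leq_maxl ?leq_maxr ?ext_lin //.
  apply: leq_trans (size_polyD _ _) _; rewrite geq_max leq_maxr andbT.
  by apply: leq_trans (size_scale_leq _ _) (leq_maxl _ _).
move=> n; rewrite hb /=.
have -> : (b n)`_n = lead_coef (b n) by rewrite /lead_coef hb.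
rewrite divff ?scale1r; last by rewrite lead_coef_eq0 -size_poly_eq0 hb.
by rewrite subrr -/(ext b v n 0) lin0 ?addr0 //; apply: ext_lin.
Qed.


Lemma linN (E : {poly K} -> {poly K}) : linear E -> forall f, E (- f) = - E f.
Proof. by move=> hE f; rewrite -scaleN1r linZ // scaleN1r. Qed.

Lemma iter_lin (Q : {poly K} -> {poly K}) n : linear Q -> linear (iter n Q).
Proof. by move=> hQ; elim: n => [|n IH] a f g //=; rewrite IH hQ. Qed.

Section QSec.
Variable p : nat -> {poly K}.
Hypothesis hp : forall n, size (p n) = n.+1.
Variable Q : {poly K} -> {poly K}.
Hypothesis hQl : linear Q.
Hypothesis hQ0 : Q (p 0%N) = 0.
Hypothesis hQS : forall n, Q (p n.+1) = p n.

Lemma Qdeg m f : (size f <= m.+1)%N -> (size (Q f) <= m)%N.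
Proof.
elim: m f => [|m IH] f hf; have [c [g [-> [hg _]]]] := decomp hp hf.
  move: hg; rewrite leqn0 size_poly_eq0 => /eqP ->.
  by rewrite hQl hQ0 (lin0 hQl) scaler0 addr0 size_poly0.
rewrite hQl hQS; apply: leq_trans (size_polyD _ _) _.
rewrite geq_max (leq_trans (size_scale_leq _ _)) ?hp //.
by apply: leq_trans (IH _ hg) _.
Qed.

Lemma Qexact m f : size f = m.+2 -> size (Q f) = m.+1.
Proof.
move=> hf; have [c [g [ef [hg hc]]]] := decomp hp (eq_leq hf).
have {}hc := hc hf; rewrite ef.
rewrite hQl hQS size_polyDl; first by rewrite size_scale ?hp.
by rewrite size_scale ?hp //; apply: leq_trans (Qdeg hg) _.
Qed.

Lemma Qnil n f : (size f <= n)%N -> iter n Q f = 0.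
Proof.
elim: n f => [|n IH] f hf.
  by move: hf; rewrite leqn0 size_poly_eq0 => /eqP ->.
by rewrite iterSr IH // Qdeg.
Qed.

Lemma Qconst c : Q c%:P = 0.
Proof. by apply/eqP; rewrite -size_poly_eq0 -leqn0 Qdeg ?size_polyC_leq1. Qed.

Lemma Qker f : Q f = 0 -> (size f <= 1)%N.
Proof.
move=> h; rewrite leqNgt; apply/negP => hs.
have [m hm] : exists m, size f = m.+2.
  by exists (size f).-2; move: hs; case: (size f) => [|[|k]].
by move: (Qexact hm); rewrite h size_poly0.
Qed.

Lemma iterQp k n : (k <= n)%N -> iter k Q (p n) = p (n - k).
Proof.
elim: k => [|k IH] hk; first by rewrite subn0.
rewrite iterS IH ?(ltnW hk) //.
by have -> : (n - k = (n - k.+1).+1)%N by rewrite subnSK.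
Qed.

End QSec.


Lemma xemb1 : xemb (1%:P : {poly K}) = 1.
Proof. by rewrite /xemb. Qed.

Section Opy.
Variable P : {poly K} -> {poly K}.
Hypothesis hP : linear P.

Lemma opy_lin2 c h h' : opy P (xemb c%:P * h + h') = xemb c%:P * opy P h + opy P h'.
Proof.
rewrite /opy /xemb rmorphD rmorphM /= swapXY_polyC map_polyC /=.
have -> : map_poly P ((c%:P)%:P * swapXY h + swapXY h')
        = (c%:P)%:P * map_poly P (swapXY h) + map_poly P (swapXY h').
  apply/polyP => i; rewrite coefD coefCM !coef_map_id0 ?(lin0 hP) //.
  by rewrite coefD coefCM !mul_polyC hP.
by rewrite rmorphD rmorphM /= swapXY_polyC map_polyC.
Qed.

Lemma opy_add h h' : opy P (h + h') = opy P h + opy P h'.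
Proof. by have := opy_lin2 1 h h'; rewrite xemb1 !mul1r. Qed.

Lemma opy0 : opy P 0 = 0.
Proof. by rewrite /opy rmorph0 map_poly0 rmorph0. Qed.

Lemma opy_yx u w : opy P (yemb u * xemb w) = yemb (P u) * xemb w.
Proof.
rewrite /opy /yemb /xemb rmorphM /= swapXY_map_polyC swapXY_polyC.
have -> : map_poly P (u%:P * w^:P) = (P u)%:P * w^:P.
  apply/polyP => i; rewrite coef_map_id0 ?(lin0 hP) // !coefCM coef_map /=.
  by rewrite mulrC mul_polyC (linZ hP) -mul_polyC mulrC.
by rewrite rmorphM /= swapXY_polyC swapXY_map_polyC.
Qed.

End Opy.

Lemma lin2_0 (F : {poly K} -> {poly {poly K}}) : lin2 F -> F 0 = 0.
Proof.
move=> hF; have := hF 1 0 0; rewrite scale1r addr0 xemb1 mul1r => h.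
by have := congr1 (fun x => x - F 0) h; rewrite /= addrK subrr => /esym.
Qed.

Lemma lin2_uniq b : (forall n, size (b n) = n.+1) ->
  forall F1 F2 : {poly K} -> {poly {poly K}}, lin2 F1 -> lin2 F2 ->
  (forall n, F1 (b n) = F2 (b n)) -> F1 =1 F2.
Proof.
move=> hb F1 F2 h1 h2 he; apply: (span_ind hb) => //.
  by rewrite !lin2_0.
by move=> c f g e1 e2; rewrite h1 h2 e1 e2.
Qed.

Section GSec.
Variable q : nat -> {poly K}.
Variable Q : {poly K} -> {poly K}.
Hypothesis hQl : linear Q.

Lemma Gsum_ext N f : (forall n, (N <= n)%N -> iter n Q f = 0) ->
  forall k, Gsum q Q (N + k) f = Gsum q Q N f.
Proof.
move=> hN; elim=> [|k IH]; first by rewrite addn0.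
by rewrite addnS /Gsum big_ord_recr /= -/(Gsum q Q _ f) IH hN ?leq_addr // /xemb mulr0 addr0.
Qed.

Lemma Gsum_eq N M f : (forall n, (N <= n)%N -> iter n Q f = 0) ->
  (forall n, (M <= n)%N -> iter n Q f = 0) -> Gsum q Q N f = Gsum q Q M f.
Proof.
move=> hN hM.
rewrite -(Gsum_ext hN (maxn N M - N)) -(Gsum_ext hM (maxn N M - M)).
by rewrite !subnKC ?leq_maxl ?leq_maxr.
Qed.

Lemma Gsum_lin N c f g :
  Gsum q Q N (c *: f + g) = xemb c%:P * Gsum q Q N f + Gsum q Q N g.
Proof.
rewrite /Gsum mulr_sumr -big_split; apply: eq_bigr => i _ /=.
rewrite (iter_lin i hQl) /xemb polyCD -mul_polyC polyCM.
by rewrite mulrDr mulrCA.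
Qed.

End GSec.

Fixpoint qrec (R : {poly K} -> {poly K}) n : {poly K} :=
  if n is n'.+1 then R (qrec R n') - ((R (qrec R n')).[0])%:P else 1.

End Basis.

Unset Implicit Arguments.

Theorem theorem2 (K : fieldType) (p : nat -> {poly K}) :
  [pchar K] =i pred0 ->
  (forall n, size (p n) = n.+1) ->
  (exists! Q : {poly K} -> {poly K}, isQ p Q) /\
  forall Q : {poly K} -> {poly K}, isQ p Q ->
    (exists! q : nat -> {poly K}, isq Q q) /\
    forall q : nat -> {poly K}, isq Q q ->
      (exists! P : {poly K} -> {poly K}, linear P /\ (forall n, P (q n) = p n)) /\
      forall P : {poly K} -> {poly K}, linear P -> (forall n, P (q n) = p n) ->
        bijective P /\ (P \o Q =1 Q \o P) /\
        (forall f : {poly K}, exists N : nat, forall n, (N <= n)%N -> iter n Q f = 0) /\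
        exists G : {poly K} -> {poly {poly K}},
          lin2 G /\
          (forall (f : {poly K}) (N : nat),
              (forall n, (N <= n)%N -> iter n Q f = 0) -> G f = Gsum q Q N f) /\
          (exists! F : {poly K} -> {poly {poly K}},
              lin2 F /\ (forall n, F (p n) = convp p n)) /\
          (forall F : {poly K} -> {poly {poly K}},
              lin2 F -> (forall n, F (p n) = convp p n) ->
              forall f, F f = opy P (G f)).
Proof.
move=> _ hp.
split.
  have [Q [hl hv]] := ext_exists (fun n => if n is n'.+1 then p n' else 0) hp.
  exists Q; split; first by split => //; split; [exact: (hv 0%N) | move=> n; exact: (hv n.+1)].
  move=> Q' [hl' [h0' hS']]; apply: functional_extensionality.
  apply: (lin_uniq hp) => // -[|n]; by rewrite hv ?h0' ?hS'.
move=> Q [hQl [hQ0 hQS]].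
have Qdeg := Qdeg hp hQl hQ0 hQS.
have Qnil := Qnil hp hQl hQ0 hQS.
have Qconst := Qconst hp hQl hQ0 hQS.
have Qker := Qker hp hQl hQ0 hQS.
have [R [hRl hRv]] := ext_exists (fun n => p n.+1) hp.
have QR : forall f, Q (R f) = f.
  apply: (lin_uniq hp (E1 := fun f => Q (R f)) (E2 := id)).
  - by move=> a f g /=; rewrite hRl hQl.
  - by [].
  - by move=> n /=; rewrite hRv hQS.
have Rdeg : forall m (f : {poly K}), (size f <= m)%N -> (size (R f) <= m.+1)%N.
  elim=> [|m IH] f hf.
    by move: hf; rewrite leqn0 size_poly_eq0 => /eqP ->; rewrite (lin0 hRl) size_poly0.
  have [c [g [-> [hg _]]]] := decomp hp hf.
  rewrite hRl hRv; apply: leq_trans (size_polyD _ _) _.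
  rewrite geq_max (leq_trans (size_scale_leq _ _)) ?hp //.
  by apply: leq_trans (IH _ hg) _.
have Qq : forall n, Q (qrec R n.+1) = qrec R n.
  by move=> n /=; rewrite (linD hQl) -polyCN Qconst QR addr0.
split.
  exists (qrec R); split.
    split.
      elim=> [|n IH]; first by rewrite /= size_poly1.
      apply/anti_leq/andP; split.
        rewrite /=; apply: leq_trans (size_polyD _ _) _.
        rewrite geq_max size_polyN Rdeg ?IH //=.
        by apply: leq_trans (size_polyC_leq1 _) _.
      rewrite ltnNge; apply/negP => h.
      by have := Qdeg _ _ h; rewrite Qq IH ltnn.
    split; first by case=> [|n] /=; rewrite ?hornerC // hornerD hornerN hornerC subrr.
    split; first by rewrite /= Qconst.
    exact: Qq.
  move=> q [hqs [hq0 [hQq0 hQqS]]]; apply: functional_extensionality.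
  elim=> [|n IH] /=.
    by rewrite (size1_polyC (eq_leq (hqs 0%N))) -horner_coef0 hq0.
  apply/eqP; rewrite eq_sym -subr_eq0; apply/eqP.
  set d := _ - _.
  have Qd : Q d = 0.
    by rewrite /d (linD hQl) (linN hQl) hQqS (Qq n) IH subrr.
  rewrite (size1_polyC (Qker _ Qd)) -horner_coef0 /d hornerD hornerN hq0.
  by rewrite /= hornerD hornerN hornerC subrr subrr.
move=> q [hqs [hq0 [hQq0 hQqS]]].
split.
  have [P [hPl hPv]] := ext_exists p hqs.
  exists P; split => // P' [hPl' hPv']; apply: functional_extensionality.
  by apply: (lin_uniq hqs) => // n; rewrite hPv hPv'.
move=> P hPl hPv.
split.
  have [P' [hPl' hPv']] := ext_exists q hp.
  exists P'.
    apply: (lin_uniq hqs (E1 := fun f => P' (P f)) (E2 := id)) => //.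
    - by move=> a f g /=; rewrite hPl hPl'.
    - by move=> n /=; rewrite hPv hPv'.
  apply: (lin_uniq hp (E1 := fun f => P (P' f)) (E2 := id)) => //.
  - by move=> a f g /=; rewrite hPl' hPl.
  - by move=> n /=; rewrite hPv' hPv.
split.
  apply: (lin_uniq hqs) => /=.
  - by move=> a f g /=; rewrite hQl hPl.
  - by move=> a f g /=; rewrite hPl hQl.
  - by case=> [|n] /=; rewrite ?hQq0 ?hPv ?(lin0 hPl) ?hQ0 ?hQqS ?hQS.
have nil : forall (f : {poly K}) N, (size f <= N)%N -> forall n, (N <= n)%N -> iter n Q f = 0.
  by move=> f N hN n hn; apply: Qnil; apply: leq_trans hn.
split; first by move=> f; exists (size f); apply: nil.
pose G := fun f : {poly K} => Gsum q Q (size f) f.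
have GE : forall (f : {poly K}) N, (forall n, (N <= n)%N -> iter n Q f = 0) -> G f = Gsum q Q N f.
  by move=> f N hN; apply: Gsum_eq => //; apply: nil.
have Glin : lin2 G.
  move=> c f g; set M := maxn (size f) (size g).
  have hf : (size f <= M)%N by apply: leq_maxl.
  have hg : (size g <= M)%N by apply: leq_maxr.
  rewrite !(GE _ M) ?Gsum_lin //; try by apply: nil.
  apply: nil; apply: leq_trans (size_polyD _ _) _.
  by rewrite geq_max hg (leq_trans (size_scale_leq _ _) hf).
exists G; split => //; split => //.
have Fl : lin2 (fun f => opy P (G f)).
  by move=> c f g /=; rewrite Glin opy_lin2.
have Fv : forall n, opy P (G (p n)) = convp p n.
  move=> n; rewrite /G hp /Gsum.
  rewrite (big_morph (opy P) (opy_add hPl) (opy0 P)).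
  rewrite /convp (reindex_inj rev_ord_inj) /=.
  apply: eq_bigr => i _.
  have hi : (i <= n)%N by rewrite -ltnS.
  rewrite subSS (iterQp hQS (leq_subr i n)) subKn // opy_yx // hPv mulrC.
  done.
split.
  exists (fun f => opy P (G f)); split => // F [hF hFv]; apply: functional_extensionality.
  by apply: (lin2_uniq hp) => // n; rewrite Fv hFv.
move=> F hF hFv f.
by apply: (lin2_uniq hp (F1 := F) (F2 := fun f => opy P (G f))) => // n; rewrite Fv hFv.
Qed.
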